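(* Let $m\ge3$ be odd and let $s=s(m)$. For every integer $n\ge1$ and every $x_0\in 2^n+2^{n+1}\mathbb{Z}_2$ (i.e. $v_2(x_0)=n$), one has $v_2\big(T_m(x_0)-x_0\big)=n+s$.
   Context: $v_2$ is the $2$-adic valuation on $\mathbb{Z}_2$. For an integer $m\ge0$, the $m$-th Chebyshev polynomial is $$T_m(x)=\sum_{k=0}^{\lfloor m/2\rfloor}(-1)^k\frac{m}{m-k}\binom{m-k}{k}2^{m-2k-1}x^{m-2k}.$$ For odd $m\ge3$, $s(m)=\max\{n\ge2:\ 2^n\mid(m+1)\text{ or }2^n\mid(m-1)\}$. *)

(* Defs.v *)
From HB Require Import structures.
From mathcomp Require Import all_boot all_order all_algebra.
Set Implicit Arguments. Unset Strict Implicit. Unset Printing Implicit Defensive.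
Import Order.TTheory GRing.Theory Num.Theory.
Local Open Scope ring_scope.

(* The rational coefficient m/(m-k) C(m-k,k) is an integer (for m >= 1), written
   as an exact nat division.  The formula is only used for odd m >= 3, where
   m-2k-1 >= 0 for all k <= m/2. *)
Definition chebT (m : nat) : {poly int} :=
  \sum_(k < (m./2).+1)
     (((-1) ^+ k * ((m * 'C(m - k, k)) %/ (m - k))%N%:Z * 2 ^+ (m - 2 * k - 1)%N)
        *: 'X^(m - 2 * k)).

(* The 2-adic integers Z_2 = lim Z/2^k Z, as coherent sequences of residues:
   z_k in [0, 2^k) is the residue of z mod 2^k and z_k = z_{k+1} mod 2^k. *)
Record Z2 := MkZ2 {
  z2res :> nat -> int;
  z2coh : forall k : nat, z2res k = (z2res k.+1 %% (2 ^+ k))%Z }.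

Definition v2_eq (z : Z2) (e : nat) : Prop := z e = 0 /\ z e.+1 <> 0.

Lemma horner_modz (p : {poly int}) (a d : int) :
  ((p.[(a %% d)%Z]) %% d)%Z = ((p.[a]) %% d)%Z.
Proof.
elim/poly_ind: p => [|p c IH]; first by rewrite !horner0.
rewrite !hornerMXaddC.
rewrite -[LHS]modzDml -[in LHS]modzMml IH modzMm.
by rewrite modzDml.
Qed.

Lemma modz_modX (x : int) (k : nat) :
  (((x %% (2 ^+ k.+1))%Z) %% (2 ^+ k))%Z = (x %% (2 ^+ k))%Z.
Proof.
apply/eqP; rewrite eqz_mod_dvd.
set q := (x %/ 2 ^+ k.+1)%Z; set r := (x %% 2 ^+ k.+1)%Z.
have -> : r - x = - (q * 2 ^+ k.+1).
  by rewrite [in X in _ - X](divz_eq x (2 ^+ k.+1)) -/q -/r opprD addrCA subrr addr0.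
by rewrite rpredN dvdz_mull // exprS dvdz_mull.
Qed.

Definition Z2_eval_res (p : {poly int}) (x : Z2) (k : nat) : int :=
  ((p.[x k]) %% (2 ^+ k))%Z.

Lemma Z2_eval_coh (p : {poly int}) (x : Z2) (k : nat) :
  Z2_eval_res p x k = (Z2_eval_res p x k.+1 %% (2 ^+ k))%Z.
Proof.
by rewrite /Z2_eval_res modz_modX (z2coh x k) horner_modz.
Qed.

Definition Z2_eval (p : {poly int}) (x : Z2) : Z2 :=
  MkZ2 (Z2_eval_coh p x).

Definition is_s (m s : nat) : Prop :=
  [/\ (2 <= s)%N, (2 ^ s %| m.+1)%N || (2 ^ s %| m.-1)%N
    & forall n : nat, (2 <= n)%N -> (2 ^ n %| m.+1)%N || (2 ^ n %| m.-1)%N ->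
        (n <= s)%N].

(* Main.v *)
Require Import Defs.
From HB Require Import structures.
From mathcomp Require Import all_boot all_order all_algebra.
From mathcomp Require Import zify ring.
Import GRing.Theory.
Local Open Scope ring_scope.

Module NatPart.
Local Open Scope nat_scope.
Lemma fact_dvd m n : m <= n -> m`! %| n`!.
Proof.
elim: n => [|n IH]; first by rewrite leqn0 => /eqP ->.
rewrite leq_eqVlt => /orP[/eqP -> //|/IH H].
by rewrite factS dvdn_mull.
Qed.

Lemma logn2_odd k : logn 2 k.*2.+1 = 0.
Proof. by apply: logn_coprime; rewrite /coprime gcdnE /= -addn1 -muln2 modnMDl. Qed.

Lemma logn2_double k : 0 < k -> logn 2 k.*2 = (logn 2 k).+1.
Proof. by move=> k0; rewrite -muln2 lognM // (pfactorK 1) // addn1. Qed.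

Lemma logfact_double j : logn 2 (j.*2)`! = j + logn 2 j`!.
Proof.
elim: j => [|j IH] //.
rewrite doubleS !factS !lognM ?muln_gt0 ?fact_gt0 // logn2_odd IH.
rewrite -doubleS logn2_double //; lia.
Qed.

Lemma logfact_lt n : 0 < n -> logn 2 n`! < n.
Proof.
elim/ltn_ind: n => n IH n0.
have := odd_double_half n; set j := n./2.
case: (odd n) => /= E.
- case: j E => [|j] E; first by rewrite -E.
  rewrite -E factS lognM ?fact_gt0 // logn2_odd logfact_double.
  have := IH j.+1; lia.
- have j0 : 0 < j by rewrite -E in n0; lia.
  rewrite -E logfact_double. have := IH j; lia.
Qed.
Lemma dvd_binl N i : N %| i * 'C(N, i).
Proof. case: i => [|i]; first by rewrite mul0n dvdn0. by rewrite -mul_bin_diag dvdn_mulr. Qed.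

Lemma key r i t : i < r -> 2 ^ t %| r * r.+1 ->
  2 ^ t.+2 %| ((r.*2.+1 * 'C(r.*2.+1 - i, i)) %/ (r.*2.+1 - i)) * 2 ^ (4 * (r - i)).
Proof.
move=> ir ht.
set j := r - i.
have j0 : 0 < j by rewrite /j; lia.
have Ni : r.*2.+1 - i = (r + j).+1 by rewrite /j; lia.
rewrite Ni.
set N := (r + j).+1.
set a := _ %/ N.
have dv : N %| r.*2.+1 * 'C(N, i).
  have -> : r.*2.+1 = N + i by rewrite /N /j; lia.
  rewrite mulnDl; apply: dvdn_add; [exact: dvdn_mulr | exact: dvd_binl].
have aN : a * N = r.*2.+1 * 'C(N, i) by rewrite divnK.
have Cs : 'C(N, i) = 'C(N, j.*2.+1).
  by rewrite -bin_sub; [congr 'C(_,_); rewrite /N /j; lia | rewrite /N /j; lia].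
have md := mul_bin_diag N j.*2.
rewrite /= in md.
have E : a * j.*2.+1 = r.*2.+1 * 'C(r + j, j.*2).
  apply/eqP; rewrite -(eqn_pmul2r (ltn0Sn (r+j))) -/N.
  rewrite mulnAC aN Cs -mulnA [_ * j.*2.+1]mulnC -md -mulnA [_ * N]mulnC.
  by [].
set C := 'C(r + j, j.*2) in E *.
have C0 : 0 < C by rewrite bin_gt0; lia.
have a0 : 0 < a.
  case: (posnP a) => // a0; move: E; rewrite a0 mul0n => /esym/eqP.
  rewrite muln_eq0 /= => /eqP; lia.
have bf : C * ((j.*2)`! * (r + j - j.*2)`!) = (r+j)`! by apply: bin_fact; lia.
have h1 : r * r.+1 * (r - j)`! %| (r + j)`!.
  apply: (@dvdn_trans (r * r.+1 * (r - 1)`!)).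
    by apply: dvdn_mul => //; apply: fact_dvd; lia.
  have -> : r * r.+1 * (r - 1)`! = (r.+1)`!.
    have -> : r = (r - 1).+1 by lia.
    rewrite !factS; rewrite subSS subn0.
    by rewrite mulnA [_ * (r - 1).+2]mulnC.
  by apply: fact_dvd; lia.
have Ej : r + j - j.*2 = r - j by lia.
rewrite Ej in bf.
have h2 : r * r.+1 %| C * (j.*2)`!.
  by rewrite -(dvdn_pmul2r (fact_gt0 (r - j))) -[C * _ * _]mulnA bf.
have h3 : 2 ^ t %| C * (j.*2)`! by apply: dvdn_trans ht h2.
rewrite pfactor_dvdn // ?muln_gt0 ?C0 ?fact_gt0 // lognM ?fact_gt0 // in h3.
have lf : logn 2 (j.*2)`! < j.*2 by apply: logfact_lt; rewrite double_gt0.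
have la : logn 2 a = logn 2 C.
  have := congr1 (logn 2) E.
  rewrite (lognM _ a0 (ltn0Sn _)) (lognM _ (ltn0Sn _) C0).
  by rewrite !logn2_odd addn0 add0n.
rewrite pfactor_dvdn ?muln_gt0 ?a0 ?expn_gt0 //.
rewrite (lognM _ a0) ?expn_gt0 // pfactorK // la.
move: h3 lf j0; clear; lia.
Qed.
End NatPart.
Import NatPart.
Definition aco (r i : nat) : nat :=
  ((r.*2.+1 * 'C(r.*2.+1 - i, i)) %/ (r.*2.+1 - i))%N.

Definition term (r : nat) (x : int) (i : nat) : int :=
  ((-1) ^+ i * (aco r i)%:Z * 2 ^+ (r.*2.+1 - 2 * i - 1)%N) * x ^+ (r.*2.+1 - 2 * i)%N.

Lemma cheb_split r x :
  (chebT r.*2.+1).[x] = \sum_(i < r) term r x i + (-1) ^+ r * (r.*2.+1)%:Z * x.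
Proof.
rewrite /chebT horner_sum (half_bit_double r true) big_ord_recr /=.
congr (_ + _).
  by apply: eq_bigr => i _; rewrite hornerZ hornerXn.
rewrite hornerZ hornerXn.
have -> : (r.*2.+1 - 2 * r = 1)%N by lia.
have -> : (r.*2.+1 - r = r.+1)%N by lia.
rewrite subnn expr0 mulr1 expr1 binSn mulnK //.
Qed.

Lemma term_dvd r t n (w : int) (i : nat) : (i < r)%N -> (1 <= n)%N ->
  (2 ^ t %| r * r.+1)%N ->
  (2 ^+ (n + t.+2) %| term r (w * 2 ^+ n) i)%Z.
Proof.
move=> ir n1 ht.
have K := @key r i t ir ht.
have h2 : `|(2:int)|%N = 2%N by [].
rewrite dvdzE /term abszM -mulrA abszMsign !abszM !abszX abszM abszX absz_nat h2.
set a := aco r i.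
set d := (r.*2.+1 - 2 * i)%N.
set e := (r.*2.+1 - 2 * i - 1)%N.
apply: (@dvdn_trans (a * 2 ^ e * (2 ^ n) ^ d)); last first.
  by rewrite expnMn; apply: dvdn_mul => //; apply: dvdn_mull.
apply: (@dvdn_trans (a * 2 ^ (4 * (r - i)) * 2 ^ n)).
  by rewrite expnD mulnC dvdn_mul.
rewrite -!mulnA dvdn_mul // -!expnD -expnM.
rewrite -expnD; apply: dvdn_exp2l; rewrite /d /e; move: ir n1; clear; nia.
Qed.

Lemma val_lin s n c ww : (0 < c)%N -> (0 < ww)%N -> (2 ^ s %| c)%N ->
  ~~ (2 ^ s.+1 %| c)%N -> ~~ (2 %| ww)%N ->
  (2 ^ (n + s) %| c * (ww * 2 ^ n))%N && ~~ (2 ^ (n + s).+1 %| c * (ww * 2 ^ n))%N.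
Proof.
move=> c0 w0 hc hc' hw.
rewrite pfactor_dvdn // in hc; rewrite pfactor_dvdn // in hc'.
rewrite -(expn1 2) pfactor_dvdn // in hw.
have p0 : (0 < c * (ww * 2 ^ n))%N by rewrite !muln_gt0 c0 w0 expn_gt0.
rewrite !pfactor_dvdn // lognM ?muln_gt0 ?w0 ?expn_gt0 // lognM ?expn_gt0 // pfactorK //.
move: hc hc' hw; clear; lia.
Qed.

Lemma main_int m s n (x : int) : (3 <= m)%N -> odd m -> is_s m s -> (1 <= n)%N ->
  (2 ^+ n %| x)%Z -> ~~ (2 ^+ n.+1 %| x)%Z ->
  (2 ^+ (n + s) %| (chebT m - 'X).[x])%Z /\ ~~ (2 ^+ (n + s).+1 %| (chebT m - 'X).[x])%Z.
Proof.
move=> m3 om [s2 hs smax] n1 dx ndx.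
have [r mr] : exists r, m = r.*2.+1.
  by exists m./2; rewrite -[LHS]odd_double_half om.
subst m.
have r1 : (1 <= r)%N by move: m3; clear; lia.
case/dvdzP: dx => w xw; subst x.
have nw : ~~ (2 %| w)%Z.
  apply: contra ndx => /dvdzP[q ->].
  by rewrite exprS -mulrA; apply: dvdz_mull; rewrite mulrC.
have h2 : `|(2:int)|%N = 2%N by [].
have w0 : (0 < `|w|)%N.
  by rewrite absz_gt0; apply: contraNneq nw => ->; rewrite dvdz0.
have nw' : ~~ (2 %| `|w|)%N by [].
case: s s2 hs smax => [|t] // s2 hs smax.
simpl in hs.
have ht : (2 ^ t %| r * r.+1)%N.
  case/orP: hs => h.
    rewrite -doubleS -muln2 expnS mulnC dvdn_pmul2r // in h.
    by rewrite dvdn_mull.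
  rewrite -muln2 expnS mulnC dvdn_pmul2r // in h.
  by rewrite dvdn_mulr.
rewrite hornerD hornerN hornerX cheb_split.
set S := \sum_(i < r) _.
have HS : (2 ^+ (n + t.+1).+1 %| S)%Z.
  apply: rpred_sum => i _.
  have -> : (n + t.+1).+1 = (n + t.+2)%N by rewrite !addnS.
  exact: term_dvd.
set L := (-1) ^+ r * (r.*2.+1)%:Z * (w * 2 ^+ n) - w * 2 ^+ n.
have HL : (2 ^+ (n + t.+1) %| L)%Z && ~~ (2 ^+ (n + t.+1).+1 %| L)%Z.
  have d4 : forall k, (2 ^ t.+1 %| k.*2)%N -> ~~ odd k.
    move=> k hk; have := dvdn_trans (dvdn_exp2l 2 s2) hk.
    by rewrite -muln2 (expnS 2 1) expn1 dvdn_pmul2r // dvdn2.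
  have Hm : forall c : nat, (0 < c)%N -> (2 ^ t.+1 %| c)%N -> ~~ (2 ^ t.+2 %| c)%N ->
     (2 ^+ (n + t.+1) %| c%:Z * (w * 2 ^+ n))%Z && ~~ (2 ^+ (n + t.+1).+1 %| c%:Z * (w * 2 ^+ n))%Z.
    move=> c c0 hc hc'; rewrite !dvdzE !abszM !abszX absz_nat h2.
    exact: val_lin.
  case: (boolP (odd r)) => orr.
    have hc : (2 ^ t.+1 %| r.*2.+2)%N.
      case/orP: hs => // /d4; by rewrite orr.
    have hc' : ~~ (2 ^ t.+2 %| r.*2.+2)%N.
      apply/negP => h; have := smax t.+2 (leq_trans s2 (leqnSn _)) (introT orP (or_introl h)).
      by rewrite ltnn.
    have -> : L = - ((r.*2.+2)%:Z * (w * 2 ^+ n)).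
      rewrite /L -signr_odd orr expr1 -[(r.*2.+2)%N]addn1 PoszD.
      ring.
    by rewrite !rpredN; apply: Hm.
  have hc : (2 ^ t.+1 %| r.*2)%N.
    case/orP: hs => // h; have := d4 r.+1; rewrite doubleS => /(_ h).
    by rewrite /= orr.
  have hc' : ~~ (2 ^ t.+2 %| r.*2)%N.
    apply/negP => h; have := smax t.+2 (leq_trans s2 (leqnSn _)) (introT orP (or_intror h)).
    by rewrite ltnn.
  have -> : L = (r.*2)%:Z * (w * 2 ^+ n).
    rewrite /L -signr_odd (negbTE orr) expr0 -[(r.*2.+1)%N]addn1 PoszD.
    ring.
  apply: Hm => //; rewrite double_gt0; by [].
have -> : S + (-1) ^+ r * (r.*2.+1)%:Z * (w * 2 ^+ n) - w * 2 ^+ n = S + L.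
  by rewrite /L addrA.
case/andP: HL => HL1 HL2; split.
  apply: rpredD => //.
  by apply: dvdz_trans HS; apply: dvdz_exp2l.
apply: contra HL2 => H.
have -> : L = (S + L) - S by rewrite addrC addKr.
exact: rpredB.
Qed.

Lemma modz_modXn (x : int) n i :
  modz (modz x (2 ^+ (n + i)%N)) (2 ^+ n) = modz x (2 ^+ n).
Proof.
elim: i x => [|i IH] x; first by rewrite addn0 modz_mod.
by rewrite -(IH (modz x (2 ^+ (n + i.+1)%N))) addnS modz_modX IH.
Qed.

Lemma z2_mod (x0 : Z2) n i : modz (x0 (n + i)%N) (2 ^+ n) = x0 n.
Proof.
elim: i => [|i IH]; first by rewrite addn0 {1}(z2coh x0 n) modz_mod -z2coh.
by rewrite -IH (z2coh x0 (n + i)) addnS modz_modXn.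
Qed.

Lemma z2_val (x0 : Z2) n i : v2_eq x0 n ->
  (2 ^+ n %| x0 (n + i.+1)%N)%Z /\ ~~ (2 ^+ n.+1 %| x0 (n + i.+1)%N)%Z.
Proof.
case=> h0 h1; split.
  by apply/dvdz_mod0P; rewrite z2_mod.
rewrite -addSnnS; apply/negP => /dvdz_mod0P; rewrite z2_mod; exact: h1.
Qed.

Theorem mainTheorem5 (m s : nat) :
  (3 <= m)%N -> odd m -> is_s m s ->
  forall (n : nat) (x0 : Z2), (1 <= n)%N -> v2_eq x0 n ->
    v2_eq (Z2_eval (chebT m - 'X) x0) (n + s).
Proof.
move=> m3 om hs n x0 n1 hv.
case: s hs => [|t] hs; first by case: hs.
split; rewrite /= /Z2_eval_res.
  have [d nd] := @z2_val x0 n t hv.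
  have [A _] := @main_int m t.+1 n _ m3 om hs n1 d nd.
  by apply/dvdz_mod0P.
have [d nd] := @z2_val x0 n t.+1 hv.
have [_ B] := @main_int m t.+1 n _ m3 om hs n1 d nd.
rewrite -addnS => /dvdz_mod0P H; by rewrite -addnS H in B.
Qed.
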